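(* Let $A$ be a finite abelian group, $G$ a group acting on $A$, $H\le G$, $q$ a prime, $f\in\mathcal{E}(G,H,A)$ and $a\in A$ with $f(a)<0$. Then: (1) For every cocyclic coset $C$ of $A$, either $C\cap\ell_G(a)=\emptyset$ or $C\cap\ell_G(a)\not\subseteq a^H$. (2) Suppose the Hall $q'$-subgroup $A_{q'}$ is cyclic. Then (a) $[\mathrm{C}_H(a_{q'}):\mathrm{C}_H(a)]\ge q$, and hence $[\mathrm{C}_H(a_{q'}):\mathrm{C}_H(a_{q'})\cap\mathrm{C}_H(A_q)]\ge q$; (b) if moreover $A_q\cong C_q\times C_q$, then (i) the center of $\mathrm{C}_{\mathrm{Aut}(A)}(A_{q'})$ is not contained in $\mathrm{Inn}_H(A)$, and (ii) $[\mathrm{C}_H(a_{q'}):\mathrm{C}_H(a_{q'})\cap\mathrm{C}_H(A_q)]$ is not divisible by $q$; in particular $[\mathrm{C}_H(a_{q'}):\mathrm{C}_H(a)]$ is not divisible by $q$.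
   Context: $a_q,a_{q'}$ are the $q$-part and $q'$-part of $a$; $A_q$, $A_{q'}$ are the Sylow $q$-subgroup and Hall $q'$-subgroup. $\mathrm{C}_H(S)$ is the pointwise stabilizer of $S$ in $H$, $a^H$ the $H$-orbit of $a$, $\mathrm{Inn}_H(A)$ the image of $H$ in $\mathrm{Aut}(A)$ under the action. A cocyclic coset of $A$ is a coset of a subgroup $K$ with $A/K$ cyclic. $\ell_G(a)$ is the local $G$-class of $a$: the set of $b\in A$ with $b_r$ $G$-conjugate to $a_r$ for every prime $r$. Definition of $\mathcal{E}(G,H,A)$: the set of functions $f:A\to\mathbb{Z}$ constant on $H$-orbits such that (I) $\sum_{X\in\mathrm{Cl}_H(A)}f(X)=1$, where $\mathrm{Cl}_H(A)$ is the set of $H$-orbits; (II) $f$ vanishes outside a single local $G$-class of $A$; (III) $\sum_{c\in C}|\mathrm{C}_H(c)|f(c)\ge0$ for every coset $C$ of a minimal cocyclic subgroup of $A$ (cocyclic subgroup not properly containing another cocyclic subgroup); (IV) $f(b)\ge -h_A[\mathrm{C}_H(b_{\pi_0}):\mathrm{C}_H(b)]$ for all $b\in A$, where $\pi_0$ is the set of primes $r$ dividing $|A|$ with $A_r$ cyclic and $h_A=\frac{\sum_{X\in\pi^-}\prod_{r\in\pi}(r^{k_r-\Delta_X(r)}-1)}{\prod_{r\in\pi}(r-1)r^{k_r-1}}$ with $\pi$ the primes dividing $|A|$, $\pi^-$ the odd-cardinality subsets of $\pi$, $\Delta_X$ the characteristic function of $X$, $k_r$ the rank of the socle of $A_r$;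 (V) $f(b)<0$ for some $b$. *)

(* Defs.v *)
From HB Require Import structures.
From mathcomp Require Import all_boot all_order all_algebra all_fingroup all_solvable.
Set Implicit Arguments. Unset Strict Implicit. Unset Printing Implicit Defensive.
Import GRing.Theory Num.Theory.
Local Open Scope group_scope.

Section Defs.
Variables (gT aT : finGroupType) (A : {group gT}) (G : {group aT}).
Variable (to : groupAction G A).

Definition cocyclic (K : {group gT}) : Prop := K \subset A /\ cyclic (A / K).

Definition min_cocyclic (K : {group gT}) : Prop :=
  cocyclic K /\ forall L : {group gT}, cocyclic L -> ~ (L \proper K).

Definition in_local_class (a b : gT) : Prop :=
  b \in A /\ forall r : nat, prime r -> b.`_r \in orbit to G a.`_r.

Definition pi0 : nat_pred := [pred r | (r \in \pi(#|A|)) && cyclic 'O_r(A)].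

Definition krank (r : nat) : nat := logn r #|'Ohm_1('O_r(A))|.

(* the set pi of primes dividing |A| (all such primes are <= |A|) *)
Definition piA : {set 'I_(#|A|.+1)} := [set r : 'I_(#|A|.+1) | (r : nat) \in \pi(#|A|)].

Definition hA : rat :=
  ((\sum_(X in powerset piA | odd #|X|)
      \prod_(r in piA) (((r : nat)%:R : rat) ^+ (krank r - (r \in X)) - 1))
   / \prod_(r in piA) (((r : nat)%:R - 1) * ((r : nat)%:R) ^+ (krank r).-1))%R.

Definition in_E (H : {group aT}) (f : gT -> int) : Prop :=
  (forall x h, x \in A -> h \in H -> f (to x h) = f x) /\
  (\sum_(X in orbit to H @: A) f (repr X) = 1)%R /\
  (exists2 a0, a0 \in A & forall b, b \in A -> ~ in_local_class a0 b -> f b = 0%R) /\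
  (forall K : {group gT}, min_cocyclic K -> forall x, x \in A ->
     (0 <= \sum_(c in K :* x) (#|'C_H[c | to]|%:Z * f c))%R) /\
  (forall b, b \in A ->
     (- hA * (#|'C_H[b.`_pi0 | to] : 'C_H[b | to]|)%:R <= (f b)%:~R :> rat)%R) /\
  (exists2 b, b \in A & (f b < 0)%R).

End Defs.

(* Main.v *)
Require Import Defs.
From HB Require Import structures.
From mathcomp Require Import all_boot all_order all_algebra all_fingroup all_solvable.
From mathcomp Require Import zify ring lra.
From Stdlib Require Import Classical.
Import Order.TTheory GRing.Theory Num.Theory.
Local Open Scope group_scope.
Set Implicit Arguments. Unset Strict Implicit. Unset Printing Implicit Defensive.

Lemma pairX (T1 T2 : finGroupType) (x : T1 * T2) n : x ^+ n = (x.1 ^+ n, x.2 ^+ n).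
Proof.
elim: n => [|n IH]; first by rewrite !expg0.
by rewrite !expgS IH.
Qed.

Lemma ZqqX (q : nat) (x : 'Z_q * 'Z_q) : prime q -> x ^+ q = 1.
Proof.
move=> pq; rewrite pairX.
have cq : #|[set: 'Z_q]| = q by rewrite cardsT card_ord Zp_cast ?prime_gt1.
have h1 : x.1 ^+ q = 1 by rewrite -[in X in _ ^+ X]cq expg_cardG ?inE.
have h2 : x.2 ^+ q = 1 by rewrite -[in X in _ ^+ X]cq expg_cardG ?inE.
by rewrite h1 h2.
Qed.

Lemma card_Zqq (q : nat) : prime q -> #|[set: 'Z_q * 'Z_q]| = (q * q)%N.
Proof. by move=> pq; rewrite cardsT card_prod card_ord Zp_cast ?prime_gt1. Qed.

Lemma ncyc_Zqq (q : nat) : prime q -> ~~ cyclic [set: 'Z_q * 'Z_q].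
Proof.
move=> pq; apply/negP => /cyclicP[x ex].
have : #[x] %| q by rewrite order_dvdn ZqqX.
rewrite /order -ex card_Zqq // => /dvdn_leq => /(_ (prime_gt0 pq)).
by move=> h; have := prime_gt1 pq; nia.
Qed.

Section Main.
Variables (gT aT : finGroupType) (A : {group gT}) (G H : {group aT}).
Variable (to : groupAction G A).
Variables (q : nat) (f : gT -> int) (a : gT).
Hypotheses (abA : abelian A) (sHG : H \subset G) (pq : prime q)
  (fE : in_E to H f) (Aa : a \in A) (fa : (f a < 0)%R).

Local Notation ell := (in_local_class to).

Lemma fH x h : x \in A -> h \in H -> f (to x h) = f x.
Proof. by case: fE => + _; apply. Qed.

Lemma fII : exists2 a0, a0 \in A & forall b, b \in A -> ~ ell a0 b -> f b = 0%R.
Proof. by case: fE => _ [_ []]. Qed.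

Lemma fIII : forall K : {group gT}, min_cocyclic A K -> forall x, x \in A ->
     (0 <= \sum_(c in K :* x) (#|'C_H[c | to]|%:Z * f c))%R.
Proof. by case: fE => _ [_ [_ []]]. Qed.

Lemma fIV : forall b, b \in A ->
     (- hA A * (#|'C_H[b.`_(pi0 A) | to] : 'C_H[b | to]|)%:R <= (f b)%:~R :> rat)%R.
Proof. by case: fE => _ [_ [_ [_ []]]]. Qed.

Lemma HG h : h \in H -> h \in G.
Proof. exact: (subsetP sHG). Qed.

Lemma gact_constt pi x h : h \in G -> x \in A -> to x.`_pi h = (to x h).`_pi.
Proof. by move=> Gh Ax; rewrite -!(actmE to Gh) morph_constt. Qed.

Lemma actA x h : h \in G -> (to x h \in A) = (x \in A).
Proof. by move=> Gh; rewrite (gact_stable to Gh). Qed.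

Lemma gM x y h : h \in G -> x \in A -> y \in A -> to (x * y) h = to x h * to y h.
Proof. by move=> Gh Ax Ay; rewrite gactM. Qed.

Lemma ell_trans x y z : ell x y -> ell y z -> ell x z.
Proof.
move=> [Ay hy] [Az hz]; split=> // r pr.
exact: (orbit_in_trans (subxx G) (hz r pr) (hy r pr)).
Qed.

Lemma ell_sym x y : x \in A -> ell x y -> ell y x.
Proof.
move=> Ax [Ay hy]; split=> // r pr.
by rewrite orbit_in_sym ?hy.
Qed.

Lemma ell_refl x : x \in A -> ell x x.
Proof. by move=> Ax; split=> // r _; apply: orbit_refl. Qed.

Lemma orbitH_A b : b \in orbit to H a -> b \in A.
Proof. by case/orbitP=> h Hh <-; rewrite actA ?HG. Qed.

Lemma ell_orbit b : b \in orbit to H a -> ell a b.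
Proof.
move=> Ob; split; first exact: orbitH_A.
case/orbitP: Ob => h Hh <- r _.
by rewrite -gact_constt ?HG // mem_orbit ?HG.
Qed.

Lemma f_orbit b : b \in orbit to H a -> f b = f a.
Proof. by case/orbitP=> h Hh <-; rewrite fH. Qed.

Lemma f_out b : b \in A -> ~ ell a b -> f b = 0%R.
Proof.
have [a0 Aa0 f0] := fII.
have ell0 : ell a0 a.
  apply: NNPP => nl; have e := f0 a Aa nl; move: fa; by rewrite e.
move=> Ab nab; apply: f0 => // l0b; apply: nab.
exact: ell_trans (ell_sym Aa0 ell0) l0b.
Qed.

Lemma min_cocyclic_exists (K : {group gT}) : cocyclic A K ->
  exists2 L : {group gT}, min_cocyclic A L & L \subset K.
Proof.
move=> [sKA cK].
pose gP := fun L : {group gT} => (L \subset A) && cyclic (A / L).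
have gPK : gP K by rewrite /gP sKA cK.
have [L minL sLK] := mingroup_exists gPK.
exists L => //; have [/andP[sLA cL] mn] := mingroupP minL.
split; first by split.
move=> M [sMA cM] pML.
have eML := mn M (introT andP (conj sMA cM)) (proper_sub pML).
by move: pML; rewrite eML (negPf (proper_irrefl _)).
Qed.


Lemma coset_neg (K : {group gT}) x c0 : cocyclic A K -> x \in A -> c0 \in K :* x ->
  c0 \in orbit to H a ->
  (forall c, c \in K :* x -> ell a c -> c \in orbit to H a) -> False.
Proof.
move=> cK Ax aKx c0O hK; have [sKA _] := cK.
have [L minL sLK] := min_cocyclic_exists cK.
have Ac0 := orbitH_A c0O.
have := fIII minL Ac0.
have sub c : c \in L :* c0 -> c \in K :* x.
  rewrite !mem_rcoset => Lc; move: aKx; rewrite mem_rcoset => Ka.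
  by rewrite -[c](mulgKV c0) -mulgA groupM // (subsetP sLK).
have cA c : c \in L :* c0 -> c \in A.
  move/sub; rewrite mem_rcoset => Kc.
  by rewrite -[c](mulgKV x) groupM // (subsetP sKA).
rewrite (bigD1 c0) ?rcoset_refl //=.
have rest : (\sum_(c in L :* c0 | c != c0) (#|'C_H[c | to]|%:Z * f c) <= 0)%R.
  rewrite sumr_le0 // => c /andP[Lc _].
  have [lc|nlc] := classic (ell a c).
    rewrite (f_orbit (hK c (sub c Lc) lc)).
    by rewrite mulr_ge0_le0 // ltW.
  by rewrite (f_out (cA c Lc) nlc) mulr0.
have pos : (0 < #|'C_H[c0 | to]|%:Z)%R by rewrite ltz_nat cardG_gt0.
have neg : (#|'C_H[c0 | to]|%:Z * f c0 < 0)%R by rewrite (f_orbit c0O) pmulr_rlt0.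
move=> h; have := lerD (lexx (#|'C_H[c0 | to]|%:Z * f c0)%R) rest.
rewrite addr0 => h2; have := le_trans h h2; by rewrite leNgt neg.
Qed.

Lemma part1 (K : {group gT}) : cocyclic A K -> forall x, x \in A ->
     (forall c, c \in K :* x -> ~ ell a c) \/
     (exists2 c, c \in K :* x & ell a c /\ c \notin orbit to H a).
Proof.
move=> cK x Ax; have [sKA _] := cK.
case: (classic (exists2 c, c \in K :* x & ell a c /\ c \notin orbit to H a)) => [|nex]; [by right|].
case: (classic (exists2 c, c \in K :* x & ell a c)) => [[c0 Kc0 lc0]|nex2]; last first.
  by left=> c Kc lc; apply: nex2; exists c.
exfalso.
have Ac0 : c0 \in A.
  by move: Kc0; rewrite mem_rcoset => Kc; rewrite -[c0](mulgKV x) groupM // (subsetP sKA).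
have hK c : c \in K :* x -> ell a c -> c \in orbit to H a.
  by move=> Kc lc; apply: NNPP => nc; apply: nex; exists c => //; split => //; apply/negP.
have c0O := hK c0 Kc0 lc0.
exact: (coset_neg cK Ax Kc0 c0O hK).
Qed.


Lemma pcore_card r : #|'O_r(A)| = (#|A|`_r)%N.
Proof. exact: card_Hall (nilpotent_pcore_Hall r (abelian_nil abA)). Qed.

Lemma krank1 (r : nat) : r \in \pi(#|A|) -> cyclic 'O_r(A) -> krank A r = 1%N.
Proof.
move=> pir cyc; have pr : prime r by move: pir; rewrite mem_primes => /and3P[].
rewrite /krank (Ohm1_cyclic_pgroup_prime (p := r)) ?pcore_pgroup //.
  by rewrite logn_prime // eqxx.
by rewrite trivg_card1 pcore_card; apply: contraTneq pir => e; rewrite -p_part_gt1 e.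
Qed.

Lemma cyc_r r : r \in \pi(#|A|) -> r != q -> cyclic 'O_q^'(A) -> cyclic 'O_r(A).
Proof.
move=> pir rq cyc; apply: cyclicS cyc; apply: pcore_max (pcore_normal _ _).
apply: sub_pgroup (pcore_pgroup _ _) => p; rewrite !inE => /eqP ->; exact: rq.
Qed.


Lemma prodP0 (X : {set 'I_(#|A|.+1)}) r : r \in piA A -> r \in X -> krank A r = 1%N ->
  (\prod_(s in piA A) (((s:nat)%:R : rat) ^+ (krank A s - (s \in X)) - 1) = 0)%R.
Proof. by move=> Pr Xr kr; rewrite (bigD1 r) //= Xr kr subnn expr0 subrr mul0r. Qed.

Lemma hA_cyc : cyclic 'O_q^'(A) -> cyclic 'O_q(A) -> hA A = 0%R.
Proof.
move=> cq' cq; rewrite /hA big1 ?mul0r // => X /andP[PX oX].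
have : X != set0 by apply: contraTneq oX => ->; rewrite cards0.
case/set0Pn=> r Xr; rewrite powersetE in PX.
have Pr := subsetP PX r Xr.
apply: (prodP0 Pr Xr); have pir : (r:nat) \in \pi(#|A|) by move: Pr; rewrite inE.
apply: (krank1 pir); have [e|ne] := eqVneq (r:nat) q.
  by rewrite e.
exact: cyc_r pir ne cq'.
Qed.


Lemma hA_bound : cyclic 'O_q^'(A) -> (hA A * (q.-1)%:R < 1 :> rat)%R.
Proof.
move=> cq'; have [cq|ncq] := boolP (cyclic 'O_q(A)).
  by rewrite hA_cyc // mul0r ltr01.
have piq : q \in \pi(#|A|).
  rewrite -p_part_gt1 -pcore_card ltnNge; apply: contra ncq => le1.
  have /eqP -> : 'O_q(A) == 1%G :> {set gT}.
    by rewrite trivg_card_le1.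
  exact: cyclic1.
have qA : q < #|A|.+1.
  by rewrite ltnS dvdn_leq // ; move: piq; rewrite mem_primes => /and3P[].
pose q0 : 'I_(#|A|.+1) := Ordinal qA.
have Pq0 : q0 \in piA A by rewrite inE.
have k1 r : r \in piA A -> r != q0 -> krank A r = 1%N.
  move=> Pr rq; have pir : (r:nat) \in \pi(#|A|) by move: Pr; rewrite inE.
  have rq' : (r:nat) != q by apply: contra rq => /eqP e; apply/eqP; apply: val_inj.
  exact: (krank1 pir (cyc_r pir rq' cq')).
have prr r : r \in piA A -> prime r.
  by rewrite inE mem_primes => /and3P[].
pose R := (\prod_(r in piA A | r != q0) (((r:nat)%:R : rat) - 1))%R.
have Rgt0 : (0 < R)%R.
  apply: prodr_gt0 => r /andP[Pr _]; rewrite subr_gt0 ltr1n.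
  exact: prime_gt1 (prr r Pr).
pose k := krank A q0.
pose Q := (((q:nat)%:R : rat) ^+ k.-1)%R.
have Qge1 : (1 <= Q)%R by rewrite exprn_ege1 // ler1n prime_gt0.
have num : (\sum_(X in powerset (piA A) | odd #|X|)
      \prod_(r in piA A) (((r : nat)%:R : rat) ^+ (krank A r - (r \in X)) - 1))%R
      = ((Q - 1) * R)%R.
  rewrite (bigD1 [set q0]) /=; last by rewrite powersetE sub1set Pq0 cards1.
  rewrite [X in (_ + X)%R]big1 ?addr0; last first.
    move=> X /andP[/andP[PX oX] nX]; rewrite powersetE in PX.
    have : ~~ (X \subset [set q0]).
      rewrite subset1 negb_or nX /=; apply: contraTneq oX => ->; by rewrite cards0.
    case/subsetPn=> r Xr; rewrite inE => rq.
    have Pr := subsetP PX r Xr.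
    exact: prodP0 Pr Xr (k1 r Pr rq).
  rewrite (bigD1 q0) //= inE eqxx subn1; congr (_ * _)%R.
  apply: eq_bigr => r /andP[Pr rq]; rewrite inE (negPf rq) subn0 k1 //.
have den : (\prod_(r in piA A) (((r : nat)%:R - 1) * ((r : nat)%:R) ^+ (krank A r).-1) : rat)%R
      = (((q:nat)%:R - 1) * Q * R)%R.
  rewrite (bigD1 q0) //=; congr (_ * _)%R.
  by apply: eq_bigr => r /andP[Pr rq]; rewrite k1 // expr0 mulr1.
rewrite /hA; set N := (\sum_(X in _ | _) _)%R; set D := (\prod_(r in _) _)%R.
have -> : N = ((Q - 1) * R)%R by exact: num.
have -> : D = (((q:nat)%:R - 1) * Q * R)%R by exact: den.
have e1 : ((q.-1)%:R : rat) = (q%:R - 1)%R by rewrite -subn1 natrB ?prime_gt0.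
have qq : (0 < (q%:R : rat) - 1)%R by rewrite subr_gt0 ltr1n prime_gt1.
have Qgt0 : (0 < Q)%R by apply: lt_le_trans Qge1; exact: ltr01.
rewrite e1.
have -> : ((Q - 1) * R / ((q%:R - 1) * Q * R) * (q%:R - 1) = (Q - 1) / Q :> rat)%R.
  by field; rewrite !gt_eqF.
rewrite ltr_pdivrMr // mul1r; lra.
Qed.


Lemma astab1_in x h : h \in G -> (h \in 'C[x | to]) = (to x h == x).
Proof. by move=> Gh; rewrite !inE Gh sub1set inE. Qed.

Lemma astab_in (S : {set gT}) h : h \in G ->
  (forall x, x \in S -> to x h = x) -> h \in 'C(S | to).
Proof. move=> Gh fx; rewrite inE Gh /= inE; apply/subsetP => x Sx; by rewrite inE fx. Qed.

Lemma constt_in (x : gT) (pi1 pi2 : nat_pred) :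
  {in \pi(#[x]), pi1 =i pi2} -> x.`_pi1 = x.`_pi2.
Proof.
move=> e.
have h1 : x.`_pi2.`_pi1 = x.`_pi1.
  by apply: sub_in_constt => p pp; rewrite (e p pp).
rewrite -h1 constt_p_elt //.
apply: sub_in_pnat (p_elt_constt pi2 x) => p pp.
have pp' : p \in \pi(#[x]).
  apply: (pi_of_dvd _ (order_gt0 x)) pp.
  by rewrite order_constt dvdn_part.
by rewrite (e p pp').
Qed.

Lemma pi0_eq (x : gT) : x \in A -> cyclic 'O_q^'(A) -> ~~ cyclic 'O_q(A) ->
  x.`_(pi0 A) = x.`_q^'.
Proof.
move=> Ax cq' ncq; apply: constt_in => p pp.
have pA : p \in \pi(#|A|) by apply: (pi_of_dvd (order_dvdG Ax) (cardG_gt0 A)).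
rewrite !inE pA /=.
have [e|ne] := eqVneq p q; first by rewrite e (negPf ncq).
by rewrite (cyc_r pA ne cq').
Qed.

Lemma sCaHc : 'C_H[a | to] \subset 'C_H[a.`_q^' | to].
Proof.
apply/subsetP => h /setIP[Hh ha]; rewrite inE Hh astab1_in ?HG //.
by rewrite gact_constt ?HG // (astab_act ha) ?inE /=.
Qed.

Lemma m_ge1 : 0 < #|'C_H[a.`_q^' | to] : 'C_H[a | to]|.
Proof. exact: indexg_gt0. Qed.

Lemma part2a1 : cyclic 'O_q^'(A) -> q <= #|'C_H[a.`_q^' | to] : 'C_H[a | to]|.
Proof.
move=> cq'; have hIV := fIV Aa.
have fa1 : (f a <= -1)%R by lia.
have fa1' : ((f a)%:~R <= -1 :> rat)%R.
  by rewrite -(ler_int rat) in fa1; move: fa1; rewrite rmorphN1.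
have [cq|ncq] := boolP (cyclic 'O_q(A)).
  move: hIV; rewrite hA_cyc // oppr0 mul0r => h.
  by have := le_trans h fa1'; rewrite ler0N1.
move: hIV; rewrite pi0_eq // => h.
set m := #|_ : _| in h *.
rewrite leqNgt; apply/negP => mq.
have hb := hA_bound cq'.
have m1 : (1 <= (m%:R : rat))%R by rewrite ler1n m_ge1.
have mq' : ((m%:R : rat) <= (q.-1)%:R)%R by rewrite ler_nat -ltnS prednK ?prime_gt0.
have hm : (1 <= hA A * m%:R :> rat)%R.
  by have := le_trans h fa1'; rewrite mulNr lerN2.
have hpos : (0 < hA A)%R.
  rewrite ltNge; apply/negP => hle.
  have : (hA A * m%:R <= 0 :> rat)%R by rewrite mulr_le0_ge0 // ler0n.
  by move=> h0; have := le_trans hm h0; rewrite ler10.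
have : (hA A * m%:R <= hA A * (q.-1)%:R :> rat)%R by rewrite ler_pM2l.
move=> h2; have := le_lt_trans (le_trans hm h2) hb; by rewrite ltxx.
Qed.


Lemma nilA : nilpotent A. Proof. exact: abelian_nil. Qed.

Lemma consttA pi x : x \in A -> x.`_pi \in A.
Proof. by move=> Ax; apply: (subsetP _ _ (cycle_constt pi x)); rewrite cycle_subG. Qed.

Lemma memO pi x : x \in A -> (x \in 'O_pi(A)) = pi.-elt x.
Proof.
move=> Ax; exact: mem_normal_Hall (nilpotent_pcore_Hall pi nilA) (pcore_normal _ _) Ax.
Qed.

Lemma consttO pi x : x \in A -> x.`_pi \in 'O_pi(A).
Proof. by move=> Ax; rewrite memO ?consttA ?p_elt_constt. Qed.

Lemma actO pi x h : h \in G -> x \in 'O_pi(A) -> to x h \in 'O_pi(A).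
Proof.
move=> Gh xO; have Ax := subsetP (pcore_sub _ _) x xO.
have xe : x.`_pi = x by rewrite constt_p_elt // -memO.
by rewrite -xe gact_constt // consttO // actA.
Qed.

Lemma sNCa : 'C_H[a.`_q^' | to] :&: 'C_H('O_q(A) | to) \subset 'C_H[a | to].
Proof.
apply/subsetP => h /setIP[/setIP[Hh hc] /setIP[_ hA']].
rewrite inE Hh astab1_in ?HG //.
rewrite -{1}(consttC q a) gactM ?HG ?consttA //.
by rewrite (astab_act hc (set11 _)) (astab_act hA' (consttO q Aa)) consttC /=.
Qed.

Lemma idx_eq : (#|'C_H[a.`_q^' | to] : 'C_H[a | to]| *
   #|'C_H[a | to] : 'C_H[a.`_q^' | to] :&: 'C_H('O_q(A) | to)|)%N
 = #|'C_H[a.`_q^' | to] : 'C_H[a.`_q^' | to] :&: 'C_H('O_q(A) | to)|.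
Proof. exact: Lagrange_index sCaHc sNCa. Qed.

Lemma part2a2 : cyclic 'O_q^'(A) ->
   q <= #|'C_H[a.`_q^' | to] : 'C_H[a.`_q^' | to] :&: 'C_H('O_q(A) | to)|.
Proof.
move=> cq'; rewrite -idx_eq; apply: leq_trans (part2a1 cq') _.
by rewrite leq_pmulr ?indexg_gt0.
Qed.

Lemma part2b3 :
   ~~ (q %| #|'C_H[a.`_q^' | to] : 'C_H[a.`_q^' | to] :&: 'C_H('O_q(A) | to)|) ->
   ~~ (q %| #|'C_H[a.`_q^' | to] : 'C_H[a | to]|).
Proof. by rewrite -idx_eq; apply: contra => /dvdn_mulr ->. Qed.


Section Isog.
Hypothesis iso : 'O_q(A) \isog [set: 'Z_q * 'Z_q].

Lemma cardAq : #|'O_q(A)| = (q * q)%N.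
Proof. by rewrite (card_isog iso) card_Zqq. Qed.

Lemma expAq x : x \in 'O_q(A) -> x ^+ q = 1.
Proof.
have : exponent 'O_q(A) %| q.
  by rewrite (exponent_isog iso); apply/exponentP => y _; apply: ZqqX.
by move/exponentP; apply.
Qed.

Lemma ncycAq : ~~ cyclic 'O_q(A).
Proof. by rewrite (isog_cyclic iso) ncyc_Zqq. Qed.

Lemma cocyc_q (K : {group gT}) : cyclic 'O_q^'(A) -> K \subset 'O_q(A) -> #|K| = q ->
  cocyclic A K.
Proof.
move=> cq' sKq cK.
have sqA := pcore_sub q A; have sq'A := pcore_sub q^' A.
have sKA := subset_trans sKq sqA.
split => //.
have nKA := sub_abelian_norm abA sKA.
rewrite -(dprodW (nilpotent_pcoreC q nilA)) quotientMl ?(subset_trans sqA) //.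
apply: cyclicM.
- apply: prime_cyclic; rewrite card_quotient ?(subset_trans sqA) //.
  by rewrite -divgS // cardAq cK mulnK ?prime_gt0.
- exact: quotient_cyclic.
- apply: subset_trans (quotientS K sq'A) _.
  apply: subset_trans (quotient_abelian K abA) _.
  by apply: centS; apply: quotientS.
- exact: pnat_coprime (quotient_pgroup _ (pcore_pgroup _ _)) (quotient_pgroup _ (pcore_pgroup _ _)).
Qed.


Lemma part2b2 : cyclic 'O_q^'(A) ->
  ~~ (q %| #|'C_H[a.`_q^' | to] : 'C_H[a.`_q^' | to] :&: 'C_H('O_q(A) | to)|).
Proof.
move=> cq'; apply/negP => qd.
set Hc := 'C_H[a.`_q^' | to] in qd *.
have sHcH : Hc \subset H := subsetIl _ _.
have sHcG : Hc \subset G := subset_trans sHcH sHG.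
have [Q sylQ] := Sylow_exists q Hc.
have sQHc := pHall_sub sylQ; have pQ := pHall_pgroup sylQ.
have sQG := subset_trans sQHc sHcG.
have nsQN : ~~ (Q \subset Hc :&: 'C_H('O_q(A) | to)).
  apply/negP => sQN.
  have := Lagrange_index (subsetIl Hc 'C_H('O_q(A) | to)) sQN.
  case/and3P: sylQ => _ _ q'i e.
  have : q^'.-nat #|Hc : Hc :&: 'C_H('O_q(A) | to)|.
    by apply: pnat_dvd q'i; rewrite -e dvdn_mulr.
  by rewrite p'natE // qd.
have [y Qy nyN] := subsetPn nsQN.
have Gy : y \in G := subsetP sQG y Qy.
have [v0 v0q nv0] : exists2 v0, v0 \in 'O_q(A) & to v0 y != v0.
  apply: NNPP => hn; apply/negP: nyN; rewrite negbK inE (subsetP sQHc y Qy) inE.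
  rewrite (subsetP sHcH y (subsetP sQHc y Qy)) /=.
  apply: (@astab_in ('O_q(A)) y Gy) => v vq; apply/eqP; apply: NNPP => nv; apply: hn; exists v => //.
  exact/negP.
pose F := 'C_('O_q(A) | to)(Q)%G.
have memF v : (v \in F) = (v \in 'O_q(A)) && [forall h in Q, to v h == v].
  rewrite /F /= subgacentE //; last exact: pcore_sub.
  rewrite inE; congr (_ && _); apply/afixP/forall_inP => hv h Qh; first by rewrite hv.
  by apply/eqP; apply: hv.
have sFq : F \subset 'O_q(A) by apply/subsetP => v; rewrite memF => /andP[].
have actsQ : [acts Q, on 'O_q(A) | to].
  exact: acts_char sQG (pcore_char _ _).
have cF : #|F| = q.
  have fm := pgroup_fix_mod pQ actsQ.
  have eF : 'Fix_('O_q(A) | to)(Q) = F.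
    by rewrite /F /= subgacentE //; exact: pcore_sub.
  rewrite eF cardAq in fm.
  have qF : q %| #|F| by rewrite /dvdn -fm modnMl.
  have : #|F| %| q ^ 2 by rewrite -mulnn -cardAq cardSg.
  case/(dvdn_pfactor _ _ pq) => j; rewrite leq_eqVlt => /orP[/eqP j2 | ].
    move: j2 => -> eF2; have : F :==: 'O_q(A).
      by rewrite eqEcard sFq eF2 cardAq /= mulnn.
    move/eqP => eFq; move: nv0; rewrite -eFq in v0q.
    move: v0q; rewrite memF => /andP[_ /forall_inP/(_ y Qy)] ->; by [].
  rewrite ltnS leq_eqVlt => /orP[/eqP -> // | ].
  rewrite ltnS leqn0 => /eqP -> e1; move: qF; rewrite e1 expn0 dvdn1 => /eqP eq1.
  by move: pq; rewrite eq1.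
have fixF h v : h \in Q -> v \in F -> to v h = v.
  by move=> Qh; rewrite memF => /andP[_ /forall_inP/(_ h Qh)/eqP].
have AF v : v \in F -> v \in A.
  by move=> Fv; apply: (subsetP (pcore_sub q A)); apply: (subsetP sFq).
have Aq v : v \in 'O_q(A) -> v \in A by apply: (subsetP (pcore_sub q A)).
have key h v : h \in Q -> v \in 'O_q(A) -> to^* (F :* v) h = F :* (to v h).
  move=> Qh vq; have Gh := subsetP sQG h Qh.
  apply/setP => z; apply/imsetP/rcosetP => [[x /rcosetP[p Fp ->] ->] | [p Fp ->]].
    by exists p => //; rewrite (gM Gh (AF p Fp) (Aq v vq)) (fixF h p Qh Fp).
  by exists (p * v); [apply/rcosetP; exists p | rewrite (gM Gh (AF p Fp) (Aq v vq)) (fixF h p Qh Fp)].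
pose S := rcosets F 'O_q(A).
have actsS : [acts Q, on S | to^*].
  apply/subsetP => h Qh; rewrite inE (subsetP sQG h Qh) /= inE.
  apply/subsetP => X /rcosetsP[v vq ->]; rewrite inE key //.
  by apply/rcosetsP; exists (to v h) => //; apply: actO (subsetP sQG h Qh) vq.
have cardS : #|S| = q.
  by rewrite -[#|S|]/(#|'O_q(A) : F|) -divgS // cardAq cF mulnK ?prime_gt0.
have FS : (F : {set gT}) \in 'Fix_(S | to^*)(Q).
  rewrite inE; apply/andP; split.
    by apply/rcosetsP; exists 1; rewrite ?group1 ?rcoset1.
  apply/afixP => h Qh; have := key h 1 Qh (group1 _).
  by rewrite gact1 ?(subsetP sQG h Qh) // !rcoset1.
have fixall : 'Fix_(S | to^*)(Q) = S.
  have fm2 := pgroup_fix_mod pQ actsS.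
  rewrite cardS in fm2.
  have qd2 : q %| #|'Fix_(S | to^*)(Q)| by rewrite /dvdn -fm2 modnn.
  apply/eqP; rewrite eqEcard subsetIl cardS.
  apply: dvdn_leq qd2; apply/card_gt0P; by exists (F : {set gT}).
have cos h v : h \in Q -> v \in 'O_q(A) -> to v h \in F :* v.
  move=> Qh vq.
  have : F :* v \in 'Fix_(S | to^*)(Q) by rewrite fixall; apply/rcosetsP; exists v.
  rewrite inE => /andP[_ /afixP/(_ h Qh)] e.
  have e2 : F :* (to v h) = F :* v by rewrite -key.
  by rewrite -e2; exact: rcoset_refl.
have sCaHc' : 'C_H[a | to] \subset Hc := sCaHc.
set c := a.`_q^'.
have Hcc h : h \in Hc -> to c h = c.
  by case/setIP => _ hc; rewrite (astab_act hc (set11 _)).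
have HcG h : h \in Hc -> h \in G by move=> Hh; apply: (subsetP sHcG).
have u1 : a.`_q != 1.
  apply/eqP => ua; have e : c = a by rewrite /c -{2}(consttC q a) ua mul1g.
  have := part2a1 cq'; rewrite -/c e indexgg => /(leq_trans (prime_gt1 pq)).
  by [].
have eCa : 'C_Hc[a | to] = 'C_H[a | to].
  apply/eqP; rewrite eqEsubset; apply/andP; split; apply/subsetP => x.
    by case/setIP => /setIP[Hx _] Cx; rewrite inE Hx Cx.
  by move=> xC; rewrite inE (subsetP sCaHc' x xC); case/setIP: xC => _ ->.
have cO : #|orbit to Hc a| = #|Hc : 'C_H[a | to]| by rewrite card_orbit_in // eCa.
have Ob_c b : b \in orbit to Hc a -> b.`_q^' = c.
  by case/orbitP => h Hh <-; rewrite -gact_constt ?HcG // Hcc.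
have Ob_A b : b \in orbit to Hc a -> b \in A.
  by case/orbitP => h Hh <-; rewrite actA ?HcG.
have [b Ob nbF] : exists2 b, b \in orbit to Hc a & b.`_q \notin F.
  apply: NNPP => hn.
  have allF b : b \in orbit to Hc a -> b.`_q \in F :\ 1.
    move=> Ob; rewrite 2!inE; apply/andP; split; last first.
      by apply: NNPP => nb; apply: hn; exists b => //; apply/negP.
    case/orbitP: Ob => h Hh <-; rewrite -gact_constt ?HcG //.
    apply: contra u1 => /eqP e; apply/eqP; apply: (act_inj to h).
    by rewrite e gact1 ?HcG.
  have inj : {in orbit to Hc a &, injective (fun b => b.`_q)}.
    move=> b1 b2 O1 O2 e.
    by rewrite -(consttC q b1) -(consttC q b2) e (Ob_c _ O1) (Ob_c _ O2).
  have := subset_leq_card (introT subsetP (fun z (hz : z \in [set b.`_q | b in orbit to Hc a]) =>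
     match imsetP hz with ex_intro2 b Ob e => eq_ind_r (fun w => w \in F :\ 1) (allF b Ob) e end)).
  have cF1 : #|F :\ 1| = q.-1.
    by have := cardsD1 1 F; rewrite cF group1 add1n => ->.
  rewrite card_in_imset // cO cF1 => h1.
  by move: (leq_trans (part2a1 cq') h1); rewrite leqNgt ltn_predL prime_gt0.
set v := b.`_q.
have Ab := Ob_A b Ob.
have vq : v \in 'O_q(A) by apply: consttO.
have sOv : orbit to Q v \subset F :* v.
  by apply/subsetP => z /orbitP[h Qh <-]; apply: cos.
have eOv : orbit to Q v = F :* v.
  apply/eqP; rewrite eqEcard sOv card_rcoset cF.
  rewrite card_orbit_in //.
  have qn : q.-nat #|Q : 'C_Q[v | to]| by apply: pnat_dvd (dvdn_indexg _ _) pQ.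
  have [k ek] := p_natP qn; rewrite ek.
  case: k ek => [|k] ek; last by rewrite expnS leq_pmulr ?expn_gt0 ?prime_gt0.
  exfalso; move: nbF; rewrite -/v memF vq /=; apply/negP; rewrite negbK.
  have o1 : #|orbit to Q v| = 1%N by rewrite card_orbit_in // ek.
  have /orbit1P vfix := card_orbit1 o1.
  by apply/forall_inP => h Qh; apply/eqP; move/afixP: vfix; apply.
have bH : b \in orbit to H a.
  by case/orbitP: Ob => h Hh <-; apply: mem_orbit; apply: (subsetP sHcH).
have hK z : z \in F :* b -> in_local_class to a z -> z \in orbit to H a.
  case/rcosetP => p Fp -> _.
  have : p * v \in orbit to Q v by rewrite eOv; apply/rcosetP; exists p.
  case/orbitP => g Qg egv.
  have Gg : g \in G := subsetP sQG g Qg.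
  have Hg : g \in H := subsetP sHcH g (subsetP sQHc g Qg).
  have e : p * b = to b g.
    rewrite -{1 2}(consttC q b) (Ob_c b Ob) -/v mulgA -egv.
    rewrite gM ?consttA ?Aa // Hcc //; exact: (subsetP sQHc).
  rewrite e; apply: (orbit_in_trans sHG) bH.
  exact: mem_orbit.
exact: (coset_neg (cocyc_q cq' sFq cF) Ab (rcoset_refl _ _) bH hK).
Qed.


Lemma commA x y : x \in A -> y \in A -> commute x y.
Proof. by move=> Ax Ay; apply: (centsP abA x Ax y Ay). Qed.

Lemma scal j : 0 < j < q -> exists2 s : {perm gT},
  s \in 'Z('C_(Aut A)('O_q^'(A) | 'P)) & s a = a.`_q ^+ j * a.`_q^'.
Proof.
case/andP => j0 jq.
pose n := #|'O_q^'(A)|.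
have cqn : coprime q n := pnat_coprime (pnat_id pq) (pcore_pgroup _ _).
pose K := chinese q n j 1.
have Kq : K = j %[mod q] := chinese_modl cqn j 1.
have Kn : K = 1 %[mod n] := chinese_modr cqn j 1.
have cardA : #|A| = (q * q * n)%N.
  by rewrite -(dprod_card (nilpotent_pcoreC q nilA)) cardAq.
have cAK : coprime #|A| K.
  rewrite cardA !coprimeMl andbb; apply/andP; split.
    rewrite coprime_sym -coprime_modl Kq coprime_modl coprime_sym prime_coprime //.
    by apply/negP => /(dvdn_leq j0); rewrite leqNgt jq.
  by rewrite coprime_sym -coprime_modl Kn coprime_modl coprime1n.
have injf : {in A &, injective (fun x => x ^+ K)}.
  move=> x y Ax Ay e.
  by rewrite -(expgK cAK Ax) -(expgK cAK Ay) /= e.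
have sBf : [set x ^+ K | x in A] \subset A.
  by apply/subsetP => _ /imsetP[x Ax ->]; rewrite groupX.
pose s := perm_in injf sBf.
have sE x : x \in A -> s x = x ^+ K by move=> Ax; rewrite perm_inE.
have sAut : s \in Aut A.
  rewrite inE perm_in_on /=; apply/morphicP => x y Ax Ay.
  by rewrite !sE ?groupM // expgMn //; apply: commA.
have fixq' x : x \in 'O_q^'(A) -> x ^+ K = x.
  move=> xq; have xn : x ^+ n = 1 by rewrite expg_cardG.
  by rewrite -(expg_mod K xn) Kn (expg_mod 1 xn) expg1.
have sC : s \in 'C_(Aut A)('O_q^'(A) | 'P).
  rewrite inE sAut /=; apply/astabP => x xq /=; rewrite apermE sE ?fixq' //.
  exact: (subsetP (pcore_sub q^' A)).
exists s; last first.
  rewrite sE // -{1}(consttC q a) expgMn; last by apply: commA; apply: consttA.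
  rewrite (fixq' _ (consttO q^' Aa)); congr (_ * _).
  have uq : a.`_q ^+ q = 1 by apply: expAq; apply: consttO.
  by rewrite -(expg_mod K uq) Kq (expg_mod j uq).
rewrite inE sC /=; apply/centP => t /setIP[tAut _]; apply/permP => x.
rewrite !permM; have [Ax|nAx] := boolP (x \in A); last first.
  by rewrite !(out_Aut _ nAx) //.
rewrite !sE ?(Aut_closed tAut) //.
by rewrite -{1}(autmE tAut) morphX // autmE.
Qed.


Lemma u_ne1 : cyclic 'O_q^'(A) -> a.`_q != 1.
Proof.
move=> cq'; apply/eqP => ua; have e : a.`_q^' = a by rewrite -{2}(consttC q a) ua mul1g.
by have := part2a1 cq'; rewrite e indexgg => /(leq_trans (prime_gt1 pq)).
Qed.

Lemma part2b1 : cyclic 'O_q^'(A) ->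
  ~~ ('Z('C_(Aut A)('O_q^'(A) | 'P)) \subset actperm to @* H).
Proof.
move=> cq'; apply/negP => sZ.
have u1 := u_ne1 cq'.
have uq : a.`_q \in 'O_q(A) by apply: consttO.
have ou : #[a.`_q] = q.
  apply/(prime_nt_dvdP pq); first by rewrite order_eq1.
  by rewrite order_dvdn expAq.
have sKq : <[a.`_q]> \subset 'O_q(A) by rewrite cycle_subG.
have cocK := cocyc_q cq' sKq ou.
apply: (coset_neg cocK Aa (rcoset_refl _ a) (orbit_refl _ _ _)).
move=> z /rcosetP[w /cycleP[i ->] ->] lz.
have ez : a.`_q ^+ i * a = a.`_q ^+ (i.+1 %% q) * a.`_q^'.
  by rewrite -{2}(consttC q a) mulgA -expgSr (expg_mod _ (expAq uq)).
rewrite ez in lz *.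
have [j0|jp] := posnP (i.+1 %% q).
  exfalso; move: lz; rewrite j0 expg0 mul1g => -[_ /(_ q pq)].
  have -> : (a.`_q^').`_q = 1 by apply/constt1P; apply: p_elt_constt.
  case/orbitP => g Gg e; move: u1.
  have -> : a.`_q = 1 by apply: (act_inj to g); rewrite e gact1.
  by rewrite eqxx.
have jq : i.+1 %% q < q by rewrite ltn_mod prime_gt0.
have [s sZs sa] := scal (introT andP (conj jp jq)).
case/morphimP: (subsetP sZ s sZs) => h Gh Hh es.
by rewrite -sa es actpermE mem_orbit.
Qed.

End Isog.

End Main.

Theorem lemma3p1 (gT aT : finGroupType) (A : {group gT}) (G H : {group aT})
    (to : groupAction G A) (q : nat) (f : gT -> int) (a : gT) :
  abelian A -> H \subset G -> prime q ->
  in_E to H f -> a \in A -> (f a < 0)%R ->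
  (* (1) *)
  (forall K : {group gT}, cocyclic A K -> forall x, x \in A ->
     (forall c, c \in K :* x -> ~ in_local_class to a c) \/
     (exists2 c, c \in K :* x & in_local_class to a c /\ c \notin orbit to H a)) /\
  (* (2) *)
  (cyclic 'O_q^'(A) ->
     (* (a) *)
     (q <= #|'C_H[a.`_q^' | to] : 'C_H[a | to]| /\
      q <= #|'C_H[a.`_q^' | to] : 'C_H[a.`_q^' | to] :&: 'C_H('O_q(A) | to)|) /\
     (* (b) *)
     ('O_q(A) \isog [set: 'Z_q * 'Z_q] ->
        ~~ ('Z('C_(Aut A)('O_q^'(A) | 'P)) \subset actperm to @* H) /\
        ~~ (q %| #|'C_H[a.`_q^' | to] : 'C_H[a.`_q^' | to] :&: 'C_H('O_q(A) | to)|) /\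
        ~~ (q %| #|'C_H[a.`_q^' | to] : 'C_H[a | to]|))).
Proof.
move=> abA sHG pq fE Aa fa; split.
  by move=> K cK x Ax; exact: (part1 sHG fE Aa fa cK Ax).
move=> cq'; split.
  split; [exact: (part2a1 abA sHG pq fE Aa fa cq') | exact: (part2a2 abA sHG pq fE Aa fa cq')].
move=> iso; split; first exact: (part2b1 abA sHG pq fE Aa fa iso cq').
have h := part2b2 abA sHG pq fE Aa fa iso cq'.
by split => //; exact: (part2b3 abA sHG Aa h).
Qed.
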